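(* Let $\bm\sigma=\sigma_1\bm e_1+\dots+\sigma_r\bm e_r\in\mathbb{Z}^r$ be a changemaker vector such that $L=\langle\bm\sigma\rangle^\perp\subseteq\mathbb{Z}^r$ admits an obtuse superbase. Suppose that for some $\ell\ge4$ and some $b>1$ the coefficients satisfy $\sigma_{b-1}<\sigma_b=\sigma_{b+1}=\dots=\sigma_{b+\ell-1}$. Then every $\sigma_k$ with $\sigma_k>\sigma_b$ satisfies $\sigma_k\ge(\ell-1)\sigma_b$.
   Context: $\mathbb{Z}^r$ has the standard pairing. A changemaker vector is $\bm\sigma=\sum\sigma_i\bm e_i$ with $\sigma_1=1$ and $\sigma_{i-1}\le\sigma_i\le1+\sigma_1+\dots+\sigma_{i-1}$ for $i\ge2$. An obtuse superbase of a rank-$k$ lattice is a spanning set $\{v_0,\dots,v_k\}$ with $v_i\cdot v_j\le0$ for $i\ne j$ and $\sum v_i=0$. *)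

(* Defs.v *)
From HB Require Import structures.
From mathcomp Require Import all_boot all_order all_algebra.
Set Implicit Arguments. Unset Strict Implicit. Unset Printing Implicit Defensive.
Import Order.TTheory GRing.Theory Num.Theory.
Local Open Scope ring_scope.

(* Vectors of Z^r are row vectors 'rV[int]_r; coordinates are 0-based in Rocq. *)

Definition dotZ (r : nat) (u v : 'rV[int]_r) : int := \sum_(i < r) u 0 i * v 0 i.

(* 1-based coordinate access: coord1 v i = v_i for 1 <= i <= r *)
Definition coord1 (r : nat) (v : 'rV[int]_r) (i : nat) : int :=
  match r as n return 'rV[int]_n -> int with
  | 0 => fun _ => 0
  | n.+1 => fun w => w 0 (inord i.-1)
  end v.

Definition changemaker (r : nat) (s : 'rV[int]_r) : Prop :=
  (0 < r)%N /\ coord1 s 1 = 1 /\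
  forall i : nat, (2 <= i <= r)%N ->
    coord1 s i.-1 <= coord1 s i /\
    coord1 s i <= 1 + \sum_(1 <= j < i) coord1 s j.

Definition in_perp (r : nat) (s x : 'rV[int]_r) : Prop := dotZ x s = 0.

Definition family_rank (r m : nat) (v : 'I_m -> 'rV[int]_r) : nat :=
  \rank (\matrix_(i < m, j < r) ((v i 0 j)%:~R : rat)).

Definition obtuse_superbase_perp (r : nat) (s : 'rV[int]_r) (k : nat)
    (v : 'I_k.+1 -> 'rV[int]_r) : Prop :=
  [/\ (forall i, in_perp s (v i)),
      (forall x, in_perp s x -> exists c : 'I_k.+1 -> int,
                   x = \sum_(i < k.+1) c i *: v i),
      family_rank v = k,
      (forall i j, i != j -> dotZ (v i) (v j) <= 0)
    & \sum_(i < k.+1) v i = 0].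

Definition has_obtuse_superbase_perp (r : nat) (s : 'rV[int]_r) : Prop :=
  exists k (v : 'I_k.+1 -> 'rV[int]_r), obtuse_superbase_perp s v.

(* Main.v *)
Require Import Defs.
From HB Require Import structures.
From mathcomp Require Import all_boot all_order all_algebra.
From mathcomp Require Import zify ring lra.
Set Implicit Arguments. Unset Strict Implicit. Unset Printing Implicit Defensive.
Import Order.TTheory GRing.Theory Num.Theory.
Local Open Scope ring_scope.

Lemma dotZC r (u v : 'rV[int]_r) : dotZ u v = dotZ v u.
Proof. by rewrite /dotZ; apply: eq_bigr => i _; rewrite mulrC. Qed.

Lemma dotZDl r (u1 u2 v : 'rV[int]_r) : dotZ (u1 + u2) v = dotZ u1 v + dotZ u2 v.
Proof. by rewrite /dotZ -big_split; apply: eq_bigr => i _; rewrite !mxE mulrDl. Qed.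

Lemma dotZZl r a (u v : 'rV[int]_r) : dotZ (a *: u) v = a * dotZ u v.
Proof. by rewrite /dotZ mulr_sumr; apply: eq_bigr => i _; rewrite !mxE mulrA. Qed.

Lemma dotZNl r (u v : 'rV[int]_r) : dotZ (- u) v = - dotZ u v.
Proof. by rewrite -scaleN1r dotZZl mulN1r. Qed.

Lemma dotZBl r (u1 u2 v : 'rV[int]_r) : dotZ (u1 - u2) v = dotZ u1 v - dotZ u2 v.
Proof. by rewrite dotZDl dotZNl. Qed.

Lemma dotZ0l r (v : 'rV[int]_r) : dotZ 0 v = 0.
Proof. by rewrite /dotZ big1 // => i _; rewrite mxE mul0r. Qed.

Lemma dotZ_suml r (I : finType) (P : pred I) (F : I -> 'rV[int]_r) v :
  dotZ (\sum_(i | P i) F i) v = \sum_(i | P i) dotZ (F i) v.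
Proof.
elim/big_rec2: _ => [|i x y _ <-]; first by rewrite dotZ0l.
by rewrite dotZDl.
Qed.

Lemma dotZDr r (u v1 v2 : 'rV[int]_r) : dotZ u (v1 + v2) = dotZ u v1 + dotZ u v2.
Proof. by rewrite dotZC dotZDl !(dotZC u). Qed.
Lemma dotZZr r a (u v : 'rV[int]_r) : dotZ u (a *: v) = a * dotZ u v.
Proof. by rewrite dotZC dotZZl dotZC. Qed.
Lemma dotZBr r (u v1 v2 : 'rV[int]_r) : dotZ u (v1 - v2) = dotZ u v1 - dotZ u v2.
Proof. by rewrite dotZC dotZBl !(dotZC u). Qed.
Lemma dotZ0r r (v : 'rV[int]_r) : dotZ v 0 = 0.
Proof. by rewrite dotZC dotZ0l. Qed.
Lemma dotZ_sumr r (I : finType) (P : pred I) (F : I -> 'rV[int]_r) v :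
  dotZ v (\sum_(i | P i) F i) = \sum_(i | P i) dotZ v (F i).
Proof. by rewrite dotZC dotZ_suml; apply: eq_bigr => i _; rewrite dotZC. Qed.

Lemma dotZ_ge0 r (u : 'rV[int]_r) : 0 <= dotZ u u.
Proof. by rewrite /dotZ sumr_ge0 // => i _; rewrite -expr2 sqr_ge0. Qed.

Lemma dotZ_eq0 r (u : 'rV[int]_r) : dotZ u u = 0 -> u = 0.
Proof.
move=> H; apply/rowP => i; rewrite mxE.
have H2 : \sum_(j < r) u 0 j ^+ 2 = 0.
  by rewrite -[RHS]H /dotZ; apply: eq_bigr => j _; rewrite expr2.
have := psumr_eq0P (fun j _ => sqr_ge0 (u 0 j)) H2.
move=> /(_ i isT).
by move/eqP; rewrite sqrf_eq0 => /eqP.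
Qed.

Lemma dotZ_delta r (i : 'I_r) (u : 'rV[int]_r) : dotZ (delta_mx 0 i) u = u 0 i.
Proof.
rewrite /dotZ (bigD1 i) //= big1 ?addr0; first by rewrite mxE !eqxx mul1r.
by move=> j /negPf ji; rewrite mxE ji andbF mul0r.
Qed.


Definition vec r n (v : 'I_n.+1 -> 'rV[int]_r) (c : 'I_n.+1 -> int) : 'rV[int]_r :=
  \sum_u c u *: v u.
Definition Wt r n (v : 'I_n.+1 -> 'rV[int]_r) (i j : 'I_n.+1) : int := - dotZ (v i) (v j).
Definition ps r n (v : 'I_n.+1 -> 'rV[int]_r) (F : 'I_n.+1 -> 'I_n.+1 -> int) : int :=
  \sum_(i : 'I_n.+1) \sum_(j : 'I_n.+1) (if (i < j)%N then Wt v i j * F i j else 0).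

Lemma symsum n (H : 'I_n.+1 -> 'I_n.+1 -> int) : (forall i j, H i j = H j i) ->
  \sum_i \sum_j H i j =
  2 * (\sum_(i : 'I_n.+1) \sum_(j : 'I_n.+1) (if (i < j)%N then H i j else 0)) + \sum_i H i i.
Proof.
move=> Hs.
have E : forall i : 'I_n.+1, \sum_j H i j = \sum_(j : 'I_n.+1) (if (i < j)%N then H i j else 0)
   + \sum_(j : 'I_n.+1) (if (j < i)%N then H i j else 0) + H i i.
  move=> i; rewrite -big_split /= (bigD1 i) //= [in RHS](bigD1 i) //= ltnn !add0r.
  rewrite addrC; congr (_ + _); apply: eq_bigr => j ji.
  case: ltngtP => // h; rewrite ?addr0 ?add0r //.
  by move: ji; rewrite (val_inj h) eqxx.
rewrite (eq_bigr _ (fun i _ => E i)) !big_split /=; congr (_ + _).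
rewrite mulr2n mulrDl mul1r; congr (_ + _).
rewrite exchange_big /=; apply: eq_bigr => i _; apply: eq_bigr => j _.
by rewrite Hs.
Qed.

Lemma dotZ_vec r n (v : 'I_n.+1 -> 'rV[int]_r) (c d : 'I_n.+1 -> int) :
  \sum_u v u = 0 ->
  dotZ (vec v c) (vec v d) = ps v (fun i j => (c i - c j) * (d i - d j)).
Proof.
move=> Hs.
set G := fun i j => dotZ (v i) (v j).
have GS : forall i j, G i j = G j i by move=> i j; rewrite /G dotZC.
have G0 : forall i, \sum_j G i j = 0.
  by move=> i; rewrite /G -dotZ_sumr Hs dotZ0r.
have X : dotZ (vec v c) (vec v d) = \sum_i \sum_j c i * d j * G i j.
  rewrite /vec dotZ_suml; apply: eq_bigr => i _.
  rewrite dotZZl dotZ_sumr mulr_sumr; apply: eq_bigr => j _.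
  by rewrite dotZZr mulrA.
set H := fun i j => - G i j * ((c i - c j) * (d i - d j)).
have HS : forall i j, H i j = H j i.
  move=> i j; rewrite /H GS; congr (_ * _); ring.
have Hd : forall i, H i i = 0 by move=> i; rewrite /H subrr mul0r mulr0.
have := symsum HS; rewrite [X in _ + X]big1 ?addr0; last by move=> i _; exact: Hd.
have -> : \sum_i \sum_j H i j = 2 * dotZ (vec v c) (vec v d).
  have E : forall i j, H i j = c i * d j * G i j + c j * d i * G i j
        - c i * d i * G i j - c j * d j * G i j.
    by move=> i j; rewrite /H; ring.
  under eq_bigr => i _ do under eq_bigr => j _ do rewrite E.
  rewrite X.
  have S1 : \sum_i \sum_j c i * d i * G i j = 0.
    by rewrite big1 // => i _; rewrite -mulr_sumr G0 mulr0.
  have S2 : \sum_(i : 'I_n.+1) \sum_(j : 'I_n.+1) c j * d j * G i j = 0.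
    rewrite exchange_big big1 // => j _.
    by rewrite -mulr_sumr (eq_bigr (fun i => G j i)) ?G0 ?mulr0 // => i _; rewrite GS.
  have S3 : \sum_(i : 'I_n.+1) \sum_(j : 'I_n.+1) c j * d i * G i j
          = \sum_i \sum_j c i * d j * G i j.
    by rewrite exchange_big; apply: eq_bigr => i _; apply: eq_bigr => j _; rewrite GS.
  rewrite (eq_bigr (fun i => \sum_j c i * d j * G i j + \sum_j c j * d i * G i j
     - \sum_j c i * d i * G i j - \sum_j c j * d j * G i j)); last first.
    by move=> i _; rewrite !sumrB big_split.
  rewrite !sumrB big_split /= S1 S2 S3; ring.
move=> E2.
have : 2 * dotZ (vec v c) (vec v d) = 2 * ps v (fun i j => (c i - c j) * (d i - d j)).
  rewrite E2 /ps; congr (_ * _); apply: eq_bigr => i _; apply: eq_bigr => j _.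
by move=> h; lia.
Qed.

Definition bz (b : bool) : int := if b then 1 else 0.




Lemma ps_ext r n (v : 'I_n.+1 -> 'rV[int]_r) F G :
  (forall i j : 'I_n.+1, (i < j)%N -> F i j = G i j) -> ps v F = ps v G.
Proof.
move=> h; apply: eq_bigr => i _; apply: eq_bigr => j _.
by case: ifP => // /h ->.
Qed.

Lemma psD r n (v : 'I_n.+1 -> 'rV[int]_r) F G :
  ps v (fun i j => F i j + G i j) = ps v F + ps v G.
Proof.
rewrite /ps -big_split; apply: eq_bigr => i _; rewrite -big_split.
by apply: eq_bigr => j _; case: ifP; rewrite ?addr0 // mulrDr.
Qed.

Lemma psZ r n (v : 'I_n.+1 -> 'rV[int]_r) a F :
  ps v (fun i j => a * F i j) = a * ps v F.
Proof.
rewrite /ps mulr_sumr; apply: eq_bigr => i _; rewrite mulr_sumr.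
by apply: eq_bigr => j _; case: ifP; rewrite ?mulr0 // mulrCA.
Qed.

Lemma psN r n (v : 'I_n.+1 -> 'rV[int]_r) F :
  ps v (fun i j => - F i j) = - ps v F.
Proof. by rewrite -mulN1r -psZ; apply: ps_ext => i j _; rewrite mulN1r. Qed.

Lemma psB r n (v : 'I_n.+1 -> 'rV[int]_r) F G :
  ps v (fun i j => F i j - G i j) = ps v F - ps v G.
Proof. by rewrite psD psN. Qed.

Lemma Wt_ge0 r n (v : 'I_n.+1 -> 'rV[int]_r) :
  (forall i j, i != j -> dotZ (v i) (v j) <= 0) ->
  forall i j : 'I_n.+1, (i < j)%N -> 0 <= Wt v i j.
Proof.
move=> H i j ij; rewrite /Wt oppr_ge0 H //.
by apply/eqP => e; move: ij; rewrite e ltnn.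
Qed.

Lemma ps_le r n (v : 'I_n.+1 -> 'rV[int]_r) F G :
  (forall i j, i != j -> dotZ (v i) (v j) <= 0) ->
  (forall i j : 'I_n.+1, (i < j)%N -> F i j <= G i j) -> ps v F <= ps v G.
Proof.
move=> Ho h; apply: ler_sum => i _; apply: ler_sum => j _.
case: ifP => // ij; apply: ler_wpM2l; [exact: Wt_ge0 | exact: h].
Qed.

Lemma ps_ge0 r n (v : 'I_n.+1 -> 'rV[int]_r) F :
  (forall i j, i != j -> dotZ (v i) (v j) <= 0) ->
  (forall i j : 'I_n.+1, (i < j)%N -> 0 <= F i j) -> 0 <= ps v F.
Proof.
move=> Ho h; have -> : 0 = ps v (fun _ _ => 0).
  by rewrite /ps big1 // => i _; rewrite big1 // => j _; case: ifP; rewrite ?mulr0.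
exact: ps_le.
Qed.

Lemma ps_eq0 r n (v : 'I_n.+1 -> 'rV[int]_r) F :
  (forall i j, i != j -> dotZ (v i) (v j) <= 0) ->
  (forall i j : 'I_n.+1, (i < j)%N -> 0 <= F i j) -> ps v F = 0 ->
  forall i j : 'I_n.+1, (i < j)%N -> Wt v i j * F i j = 0.
Proof.
move=> Ho h H0 i j ij.
have T : forall i j : 'I_n.+1, 0 <= (if (i < j)%N then Wt v i j * F i j else 0).
  move=> a b; case: ifP => // ab; apply: mulr_ge0; [exact: Wt_ge0 | exact: h].
have I : forall i : 'I_n.+1, true -> 0 <= \sum_(j : 'I_n.+1) (if (i < j)%N then Wt v i j * F i j else 0).
  by move=> a _; apply: sumr_ge0 => b _; exact: T.
have := psumr_eq0P I H0; move=> /(_ i isT) H1.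
have := psumr_eq0P (fun b (_ : true) => T i b) H1; move=> /(_ j isT).
by rewrite ij.
Qed.

Lemma vec_perp r n (v : 'I_n.+1 -> 'rV[int]_r) s c :
  (forall i, dotZ (v i) s = 0) -> dotZ (vec v c) s = 0.
Proof.
move=> H; rewrite /vec dotZ_suml big1 // => i _; by rewrite dotZZl H mulr0.
Qed.

Lemma vecD r n (v : 'I_n.+1 -> 'rV[int]_r) c d :
  vec v (fun u => c u + d u) = vec v c + vec v d.
Proof. by rewrite /vec -big_split; apply: eq_bigr => u _; rewrite scalerDl. Qed.

Lemma vecZ r n (v : 'I_n.+1 -> 'rV[int]_r) a c :
  vec v (fun u => a * c u) = a *: vec v c.
Proof. by rewrite /vec scaler_sumr; apply: eq_bigr => u _; rewrite scalerA. Qed.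

Lemma vec_const r n (v : 'I_n.+1 -> 'rV[int]_r) a :
  \sum_u v u = 0 -> vec v (fun _ => a) = 0.
Proof. by move=> H; rewrite /vec -scaler_sumr H scaler0. Qed.

Lemma vec_ext r n (v : 'I_n.+1 -> 'rV[int]_r) c d :
  (forall u, c u = d u) -> vec v c = vec v d.
Proof. by move=> h; apply: eq_bigr => u _; rewrite h. Qed.


Definition irreducible r (s x : 'rV[int]_r) := forall y z : 'rV[int]_r,
  dotZ y s = 0 -> dotZ z s = 0 -> x = y + z -> 0 <= dotZ y z -> y = 0 \/ z = 0.

Lemma normL r (s x : 'rV[int]_r) : (forall i, 0 < s 0 i) ->
  dotZ x s = 0 -> x != 0 -> 2 <= dotZ x x.
Proof.
move=> Hp Hx Hn; rewrite leNgt; apply/negP => H1.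
have [i xi] : exists i, x 0 i != 0.
  apply/existsP; apply: contraR Hn => /existsPn h; apply/eqP/rowP => j.
  by rewrite mxE; apply/eqP; rewrite -[_ == _]negbK h.
have Hi : 1 <= x 0 i * x 0 i.
  by move: xi; case: (x 0 i) => [[|m]|m] //= _; lia.
have S : dotZ x x = x 0 i * x 0 i + \sum_(j | j != i) x 0 j * x 0 j.
  by rewrite /dotZ (bigD1 i).
have Sge : 0 <= \sum_(j | j != i) x 0 j * x 0 j.
  by apply: sumr_ge0 => j _; rewrite -expr2 sqr_ge0.
have S0 : \sum_(j | j != i) x 0 j * x 0 j = 0 by lia.
have Z : forall j, j != i -> x 0 j = 0.
  move=> j ji; have := psumr_eq0P (fun j _ => sqr_ge0 (x 0 j)).
  move=> /(_ (fun j => j != i)).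
  have S0' : \sum_(j | j != i) x 0 j ^+ 2 = 0.
    by rewrite -[RHS]S0; apply: eq_bigr => k _; rewrite expr2.
  by move=> /(_ S0' j ji) /eqP; rewrite sqrf_eq0 => /eqP.
move: Hx; rewrite /dotZ (bigD1 i) //= big1 ?addr0; last first.
  by move=> j /Z ->; rewrite mul0r.
move/eqP; rewrite mulf_eq0 (negPf xi) /=; apply/negP.
by rewrite gt_eqF.
Qed.

Lemma irr2 r (s x : 'rV[int]_r) : (forall i, 0 < s 0 i) ->
  dotZ x x = 2 -> irreducible s x.
Proof.
move=> Hp Hxx y z Hy Hz E Hyz.
case: (y =P 0) => [->|/eqP yn]; first by left.
case: (z =P 0) => [->|/eqP zn]; first by right.
have := normL Hp Hy yn; have := normL Hp Hz zn.
move: Hxx; rewrite E dotZDl !dotZDr (dotZC z y) => h1 h2 h3.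
lia.
Qed.

Lemma levelset_aux r n (v : 'I_n.+1 -> 'rV[int]_r) s :
  \sum_u v u = 0 -> (forall i, dotZ (v i) s = 0) ->
  (forall i j, i != j -> dotZ (v i) (v j) <= 0) ->
  forall (N : nat) c L0, (forall u, L0 <= c u <= L0 + N%:Z) ->
  irreducible s (vec v c) -> exists U : 'I_n.+1 -> bool, vec v c = vec v (fun u => bz (U u)).
Proof.
move=> Hs Hp Ho; elim=> [|N IH] c L0 Hc Hirr.
  exists (fun _ => false).
  rewrite (@vec_ext _ _ v c (fun _ => L0)); last by move=> u; have := Hc u; lia.
  by rewrite !vec_const.
set c1 := fun u => bz (L0 < c u).
set c2 := fun u => c u - L0 - c1 u.
have Ec : vec v c = vec v c1 + vec v c2.
  rewrite -vecD (@vec_ext _ _ v c (fun u => (c1 u + c2 u) + L0)); last first.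
    by move=> u; rewrite /c2; ring.
  by rewrite vecD vec_const // addr0.
have Hprod : 0 <= dotZ (vec v c1) (vec v c2).
  rewrite dotZ_vec //; apply: ps_ge0 => // i j _.
  rewrite /c2 /c1 /bz; have := Hc i; have := Hc j.
  case: ifP => /= h1; case: ifP => /= h2; nia.
have [E1|E2] := Hirr _ _ (vec_perp _ Hp) (vec_perp _ Hp) Ec Hprod.
  have H2 : forall u, 0 <= c2 u <= 0 + N%:Z.
    move=> u; rewrite /c2 /c1 /bz; have := Hc u; case: ifP => /= h; lia.
  have Hirr2 : irreducible s (vec v c2).
    by rewrite -[vec v c2]add0r -E1 -Ec.
  have [U HU] := IH c2 0 H2 Hirr2.
  by exists U; rewrite Ec E1 add0r.
by exists (fun u => L0 < c u); rewrite Ec E2 addr0.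
Qed.

Lemma levelset r n (v : 'I_n.+1 -> 'rV[int]_r) s :
  \sum_u v u = 0 -> (forall i, dotZ (v i) s = 0) ->
  (forall i j, i != j -> dotZ (v i) (v j) <= 0) ->
  forall c, irreducible s (vec v c) ->
  exists U : 'I_n.+1 -> bool, vec v c = vec v (fun u => bz (U u)).
Proof.
move=> Hs Hp Ho c Hirr.
set S := \sum_u `|c u|.
have HS : forall u, `|c u| <= S.
  move=> u; rewrite /S (bigD1 u) //= lerDl; apply: sumr_ge0 => j _; exact: normr_ge0.
have S0 : 0 <= S by apply: le_trans (HS ord0); exact: normr_ge0.
apply: (levelset_aux Hs Hp Ho (N := absz (2 * S)) (L0 := - S)) => // u.
have := HS u; have : (absz (2 * S))%:Z = 2 * S by rewrite gez0_abs // mulr_ge0.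
move=> ->; have := ler_norm (c u); have := ler_normr (c u) S.
lia.
Qed.

Lemma ps_leW r n (v : 'I_n.+1 -> 'rV[int]_r) F G :
  (forall i j : 'I_n.+1, (i < j)%N -> Wt v i j * F i j <= Wt v i j * G i j) ->
  ps v F <= ps v G.
Proof.
move=> h; apply: ler_sum => i _; apply: ler_sum => j _.
by case: ifP => // ij; apply: h.
Qed.

Definition sp n (X : 'I_n.+1 -> bool) (i j : 'I_n.+1) : int := bz (X i != X j).
Definition pr n (X Y : 'I_n.+1 -> bool) (i j : 'I_n.+1) : int :=
  (bz (X i) - bz (X j)) * (bz (Y i) - bz (Y j)).
Definition bvec r n (v : 'I_n.+1 -> 'rV[int]_r) (X : 'I_n.+1 -> bool) := vec v (fun u => bz (X u)).

Lemma dot_bvec r n (v : 'I_n.+1 -> 'rV[int]_r) X Y : \sum_u v u = 0 ->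
  dotZ (bvec v X) (bvec v Y) = ps v (pr X Y).
Proof. by move=> Hs; rewrite /bvec dotZ_vec. Qed.

Lemma prXX n (X : 'I_n.+1 -> bool) i j : pr X X i j = sp X i j.
Proof. by rewrite /pr /sp /bz; case: (X i); case: (X j). Qed.

Lemma notgood r n (v : 'I_n.+1 -> 'rV[int]_r) s U X :
  \sum_u v u = 0 -> (forall i, dotZ (v i) s = 0) ->
  (forall i j, i != j -> dotZ (v i) (v j) <= 0) ->
  irreducible s (bvec v U) -> ps v (sp X) = 2 -> ps v (pr U X) = 0 ->
  ps v (fun i j => sp U i j * sp X i j) = 0.
Proof.
move=> Hs Hp Ho Hirr HX HUX.
set G := ps v (fun i j => sp U i j * sp X i j).
have G0 : 0 <= G by apply: ps_ge0 => // i j _; rewrite /sp /bz; case: ifP; case: ifP.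
have Ev : G = 2 * ps v (fun i j => bz [&& U i != U j, X i != X j & U i == X i]).
  rewrite -psZ -[G]addr0 -HUX -psD; apply: ps_ext => i j _.
  by rewrite /sp /pr /bz; case: (U i); case: (U j); case: (X i); case: (X j).
case: (G =P 0) => // /eqP Gn.
have G2 : 2 <= G by lia.
set al := ps v (fun i j => bz (U i && U j) * sp X i j).
set de := ps v (fun i j => bz (~~ U i && ~~ U j) * sp X i j).
have Dec : ps v (sp X) = al + de + G.
  rewrite /al /de /G -!psD; apply: ps_ext => i j _.
  by rewrite /sp /pr /bz; case: (U i); case: (U j); case: (X i); case: (X j).
have al0 : 0 <= al by apply: ps_ge0 => // i j _; rewrite /sp /bz; case: ifP; case: ifP.
have de0 : 0 <= de by apply: ps_ge0 => // i j _; rewrite /sp /bz; case: ifP; case: ifP.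
have alz : al = 0 by lia.
set x := bvec v (fun u => U u && X u).
set y := bvec v (fun u => U u && ~~ X u).
have Exy : bvec v U = x + y.
  rewrite /x /y /bvec -vecD; apply: vec_ext => u.
  by rewrite /bz; case: (U u); case: (X u).
have xy : dotZ x y = 0.
  rewrite /x /y dot_bvec // -oppr0 -alz -psN; apply: ps_ext => i j _.
  by rewrite /sp /pr /bz; case: (U i); case: (U j); case: (X i); case: (X j).
have xx : G <= 2 * dotZ x x.
  rewrite /x dot_bvec // -psZ -[G]addr0 -HUX -psD; apply: ps_le => // i j _.
  by rewrite /sp /pr /bz; case: (U i); case: (U j); case: (X i); case: (X j).
have yy : G <= 2 * dotZ y y.
  rewrite /y dot_bvec // -psZ -[G]subr0 -HUX -psB; apply: ps_le => // i j _.
  by rewrite /sp /pr /bz; case: (U i); case: (U j); case: (X i); case: (X j).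
have := Hirr x y (vec_perp _ Hp) (vec_perp _ Hp) Exy.
rewrite xy lexx => /(_ isT) [x0|y0].
  by move: xx; rewrite x0 dotZ0l; lia.
by move: yy; rewrite y0 dotZ0l; lia.
Qed.

Lemma sp_ge0 n (X : 'I_n.+1 -> bool) i j : 0 <= sp X i j.
Proof. by rewrite /sp /bz; case: ifP. Qed.

Lemma ps_sp1 r n (v : 'I_n.+1 -> 'rV[int]_r) X Z :
  (forall i j, i != j -> dotZ (v i) (v j) <= 0) ->
  ps v (pr X Z) != 0 -> 1 <= ps v (fun i j => sp X i j * sp Z i j).
Proof.
move=> Ho h.
have h1 : ps v (pr X Z) <= ps v (fun i j => sp X i j * sp Z i j).
  apply: ps_le => // i j _.
  by rewrite /sp /pr /bz; case: (X i); case: (X j); case: (Z i); case: (Z j).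
have h2 : - ps v (pr X Z) <= ps v (fun i j => sp X i j * sp Z i j).
  rewrite -psN; apply: ps_le => // i j _.
  by rewrite /sp /pr /bz; case: (X i); case: (X j); case: (Z i); case: (Z j).
lia.
Qed.

Lemma badboth r n (v : 'I_n.+1 -> 'rV[int]_r) U X Y Z :
  (forall i j, i != j -> dotZ (v i) (v j) <= 0) ->
  ps v (sp X) = 2 -> ps v (sp Y) = 2 -> ps v (sp Z) = 2 ->
  ps v (pr X Y) = 0 -> ps v (pr X Z) != 0 -> ps v (pr Y Z) != 0 ->
  ps v (pr U Z) != 0 ->
  ps v (fun i j => sp U i j * sp X i j) = 0 ->
  ps v (fun i j => sp U i j * sp Y i j) = 0 ->
  ps v (sp (fun u => X u (+) Y u)) = 0.
Proof.
move=> Ho HX HY HZ XY XZ YZ UZ UX UY.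
have sXZ := ps_sp1 Ho XZ; have sYZ := ps_sp1 Ho YZ; have sUZ := ps_sp1 Ho UZ.
have pUX := ps_eq0 Ho (fun i j _ => mulr_ge0 (sp_ge0 U i j) (sp_ge0 X i j)) UX.
have pUY := ps_eq0 Ho (fun i j _ => mulr_ge0 (sp_ge0 U i j) (sp_ge0 Y i j)) UY.
set T := ps v (fun i j => sp X i j * sp Y i j * sp Z i j).
have M : ps v (fun i j => sp U i j * sp Z i j) + ps v (fun i j => sp X i j * sp Z i j)
   + ps v (fun i j => sp Y i j * sp Z i j) - T <= ps v (sp Z).
  rewrite /T -!psD -psB; apply: ps_leW => i j ij.
  have := pUX i j ij; have := pUY i j ij.
  case: (Wt v i j =P 0) => [->|/eqP Wn]; first by rewrite !mul0r.
  move=> /eqP; rewrite mulf_eq0 (negPf Wn) /= => /eqP e1.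
  move=> /eqP; rewrite mulf_eq0 (negPf Wn) /= => /eqP e2.
  apply: ler_wpM2l; first by apply: Wt_ge0.
  move: e1 e2; rewrite /sp /bz.
  by case: (X i); case: (X j); case: (Y i); case: (Y j); case: (Z i); case: (Z j);
     case: (U i); case: (U j).
set S := ps v (fun i j => sp X i j * sp Y i j).
have TS : T <= S.
  apply: ps_le => // i j _; rewrite /sp /bz.
  by case: (X i); case: (X j); case: (Y i); case: (Y j); case: (Z i); case: (Z j).
have Ev : S = 2 * ps v (fun i j => bz [&& X i != X j, Y i != Y j & X i == Y i]).
  rewrite -psZ -[S]addr0 -XY -psD; apply: ps_ext => i j _.
  by rewrite /sp /pr /bz; case: (X i); case: (X j); case: (Y i); case: (Y j).
have SX : S <= 2.
  rewrite -HX; apply: ps_le => // i j _; rewrite /sp /bz.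
  by case: (X i); case: (X j); case: (Y i); case: (Y j).
have SY : S <= 2.
  rewrite -HY; apply: ps_le => // i j _; rewrite /sp /bz.
  by case: (X i); case: (X j); case: (Y i); case: (Y j).
have S2 : S = 2 by lia.
have E : ps v (sp (fun u => X u (+) Y u)) = ps v (sp X) + ps v (sp Y) - 2 * S.
  rewrite /S -psZ -psD -psB; apply: ps_ext => i j _.
  by rewrite /sp /bz; case: (X i); case: (X j); case: (Y i); case: (Y j).
by rewrite E HX HY S2.
Qed.

Definition root r (a b : 'I_r) : 'rV[int]_r := delta_mx 0 a - delta_mx 0 b.

Lemma dot_root r (a b : 'I_r) x : dotZ (root a b) x = x 0 a - x 0 b.
Proof. by rewrite /root dotZBl !dotZ_delta. Qed.

Lemma root_entry r (a b c : 'I_r) : root a b 0 c = (c == a)%:R - (c == b)%:R.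
Proof. by rewrite /root !mxE. Qed.

Lemma cut_of r n (v : 'I_n.+1 -> 'rV[int]_r) s :
  \sum_u v u = 0 -> (forall i, dotZ (v i) s = 0) ->
  (forall i j, i != j -> dotZ (v i) (v j) <= 0) ->
  (forall x, dotZ x s = 0 -> exists c : 'I_n.+1 -> int, x = \sum_(i < n.+1) c i *: v i) ->
  forall x, dotZ x s = 0 -> irreducible s x -> exists U, x = bvec v U.
Proof.
move=> Hs Hp Ho Hsp x Hx Hirr.
have [c Ec] := Hsp x Hx.
have Ev : x = vec v c by [].
rewrite Ev in Hirr; have [U HU] := levelset Hs Hp Ho Hirr.
by exists U; rewrite Ev HU.
Qed.

Lemma not2 (z : int) : 1 - 0 + (0 - 0) <> 2 * z.
Proof. lia. Qed.

Lemma root_dot r (a b c d : 'I_r) :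
  dotZ (root a b) (root c d) =
  ((a == c)%:R - (a == d)%:R) - ((b == c)%:R - (b == d)%:R).
Proof. by rewrite dot_root !root_entry. Qed.

Lemma core r n (v : 'I_n.+1 -> 'rV[int]_r) (s : 'rV[int]_r)
  (Hpos : forall i, 0 < s 0 i)
  (Hp : forall i, dotZ (v i) s = 0)
  (Hsp : forall x, dotZ x s = 0 -> exists c : 'I_n.+1 -> int, x = \sum_(i < n.+1) c i *: v i)
  (Ho : forall i j, i != j -> dotZ (v i) (v j) <= 0)
  (Hs : \sum_u v u = 0)
  (f1 f2 f3 f4 : 'I_r) (d12 : f1 != f2) (d13 : f1 != f3) (d14 : f1 != f4)
  (d23 : f2 != f3) (d24 : f2 != f4) (d34 : f3 != f4)
  (e12 : s 0 f1 = s 0 f2) (e13 : s 0 f1 = s 0 f3) (e14 : s 0 f1 = s 0 f4)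
  (w : 'rV[int]_r) (Hw : dotZ w s = 0) (Hirr : irreducible s w)
  (w12 : w 0 f1 = w 0 f2) (w34 : w 0 f3 = w 0 f4) (w13 : w 0 f1 != w 0 f3) : False.
Proof.
have cut := cut_of Hs Hp Ho Hsp.
set rX := root f1 f2; set rY := root f3 f4; set rZ := root f1 f3.
have Ent : forall a b c : 'I_r, root a b 0 c = (c == a)%:R - (c == b)%:R := @root_entry r.
have n21 : (f2 == f1) = false by apply/negbTE; rewrite eq_sym.
have n31 : (f3 == f1) = false by apply/negbTE; rewrite eq_sym.
have n41 : (f4 == f1) = false by apply/negbTE; rewrite eq_sym.
have n32 : (f3 == f2) = false by apply/negbTE; rewrite eq_sym.
have n42 : (f4 == f2) = false by apply/negbTE; rewrite eq_sym.
have n43 : (f4 == f3) = false by apply/negbTE; rewrite eq_sym.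
have n12 := negPf d12; have n13 := negPf d13; have n14 := negPf d14.
have n23 := negPf d23; have n24 := negPf d24; have n34 := negPf d34.
have pX : dotZ rX s = 0 by rewrite dot_root e12 subrr.
have pY : dotZ rY s = 0 by rewrite dot_root -e13 -e14 subrr.
have pZ : dotZ rZ s = 0 by rewrite dot_root e13 subrr.
have XX : dotZ rX rX = 2 by rewrite dot_root !Ent !eqxx n21 n12.
have YY : dotZ rY rY = 2 by rewrite dot_root !Ent !eqxx n43 n34.
have ZZ : dotZ rZ rZ = 2 by rewrite dot_root !Ent !eqxx n31 n13.
have [X EX] := cut _ pX (irr2 Hpos XX).
have [Y EY] := cut _ pY (irr2 Hpos YY).
have [Z EZ] := cut _ pZ (irr2 Hpos ZZ).
have [U EU] := cut _ Hw Hirr.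
have sX : ps v (sp X) = 2.
  by rewrite -XX {1 2}EX dot_bvec //; apply: ps_ext => i j _; rewrite prXX.
have sY : ps v (sp Y) = 2.
  by rewrite -YY {1 2}EY dot_bvec //; apply: ps_ext => i j _; rewrite prXX.
have sZ : ps v (sp Z) = 2.
  by rewrite -ZZ {1 2}EZ dot_bvec //; apply: ps_ext => i j _; rewrite prXX.
have XY : ps v (pr X Y) = 0.
  by rewrite -dot_bvec // -EX -EY root_dot ?eqxx ?n12 ?n13 ?n14 ?n21 ?n23 ?n24 ?n31 ?n32 ?n34 ?n41 ?n42 ?n43 subrr.
have XZ : ps v (pr X Z) != 0.
  by rewrite -dot_bvec // -EX -EZ root_dot ?eqxx ?n12 ?n13 ?n14 ?n21 ?n23 ?n24 ?n31 ?n32 ?n34 ?n41 ?n42 ?n43.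
have YZ : ps v (pr Y Z) != 0.
  by rewrite -dot_bvec // -EY -EZ root_dot ?eqxx ?n12 ?n13 ?n14 ?n21 ?n23 ?n24 ?n31 ?n32 ?n34 ?n41 ?n42 ?n43.
have UX : ps v (pr U X) = 0.
  by rewrite -dot_bvec // -EU -EX dotZC dot_root w12 subrr.
have UY : ps v (pr U Y) = 0.
  by rewrite -dot_bvec // -EU -EY dotZC dot_root w34 subrr.
have UZ : ps v (pr U Z) != 0.
  by rewrite -dot_bvec // -EU -EZ dotZC dot_root subr_eq0.
have IU : irreducible s (bvec v U) by rewrite -EU.
have gX := notgood Hs Hp Ho IU sX UX.
have gY := notgood Hs Hp Ho IU sY UY.
have V0 := badboth Ho sX sY sZ XY XZ YZ UZ gX gY.
set V := fun u => X u (+) Y u.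
have BV : bvec v V = 0.
  apply: dotZ_eq0; rewrite dot_bvec // -V0; apply: ps_ext => i j _; exact: prXX.
have E2 : rX + rY = 2 *: bvec v (fun u => X u && Y u).
  rewrite EX EY /bvec -vecD -vecZ -[RHS]add0r -BV /bvec -vecD.
  by apply: vec_ext => u; rewrite /V /bz; case: (X u); case: (Y u).
have := congr1 (fun m : 'rV[int]_r => m 0 f1) E2.
rewrite /= !mxE /rX /rY !eqxx n12 n13 n14 /=.
apply: not2.
Qed.


Lemma sum_ge_mem R (f : 'I_R -> int) (T : {set 'I_R}) j :
  (forall i, 0 <= f i) -> j \in T -> f j <= \sum_(i in T) f i.
Proof.
move=> H jT; rewrite (bigD1 j) //= lerDl; apply: sumr_ge0 => i _; exact: H.
Qed.

Lemma sum_sub R (f : 'I_R -> int) (T N : {set 'I_R}) :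
  T \subset N -> \sum_(i in T) f i + \sum_(i in N :\: T) f i = \sum_(i in N) f i.
Proof. by move=> h; rewrite [RHS](big_setID T) /= (setIidPr h). Qed.

Lemma sum_ge0 R (f : 'I_R -> int) (T : {set 'I_R}) :
  (forall i, 0 <= f i) -> 0 <= \sum_(i in T) f i.
Proof. by move=> H; apply: sumr_ge0 => i _; exact: H. Qed.

Lemma sum_eq0 R (f : 'I_R -> int) (T : {set 'I_R}) :
  (forall i, 0 < f i) -> \sum_(i in T) f i = 0 -> T = set0.
Proof.
move=> H S; apply/setP => j; rewrite inE; apply/negP => jT.
have := sum_ge_mem (fun i => ltW (H i)) jT; rewrite S; have := H j; lia.
Qed.

Lemma sum_full R (f : 'I_R -> int) (T N : {set 'I_R}) :
  (forall i, 0 < f i) -> T \subset N -> \sum_(i in T) f i = \sum_(i in N) f i -> T = N.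
Proof.
move=> H h S; have := sum_sub f h; rewrite S => E.
have E0 : \sum_(i in N :\: T) f i = 0 by lia.
have := sum_eq0 H E0 => /setP D; apply/eqP; rewrite eqEsubset h /=.
apply/subsetP => j jN; apply/negPn/negP => jT; have := D j.
by rewrite !inE jT jN.
Qed.

Lemma sum_le_miss R (f : 'I_R -> int) (T N : {set 'I_R}) j :
  (forall i, 0 <= f i) -> T \subset N -> j \in N -> j \notin T ->
  \sum_(i in T) f i + f j <= \sum_(i in N) f i.
Proof.
move=> H h jN jT; rewrite -(sum_sub f h) lerD2l; apply: sum_ge_mem => //.
by rewrite inE jT jN.
Qed.

Definition pmvec R (Pos Neg : {set 'I_R}) : 'rV[int]_R :=
  \row_j ((j \in Pos)%:R - (j \in Neg)%:R).

Lemma dot_pm R (A B : {set 'I_R}) (s : 'rV[int]_R) :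
  dotZ (pmvec A B) s = \sum_(i in A) s 0 i - \sum_(i in B) s 0 i.
Proof.
rewrite /dotZ /pmvec !(big_mkcond (fun i => i \in _)) -sumrB.
by apply: eq_bigr => i _; rewrite mxE; case: (i \in A); case: (i \in B);
  rewrite ?mul1r ?mul0r ?subr0 ?sub0r ?mulN1r ?mulrBl ?mul1r ?subrr.
Qed.

Lemma irr_pm R (s : 'rV[int]_R) (Pos Neg : {set 'I_R}) :
  (forall i, 0 < s 0 i) -> [disjoint Pos & Neg] ->
  (forall T T' : {set 'I_R}, T \subset Pos -> T' \subset Neg ->
     \sum_(i in T) s 0 i = \sum_(i in T') s 0 i ->
     (T = set0 /\ T' = set0) \/ (T = Pos /\ T' = Neg)) ->
  irreducible s (pmvec Pos Neg).
Proof.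
move=> Hpos Hdis HC y z Hy Hz E Hyz.
have Hw : forall j, pmvec Pos Neg 0 j = y 0 j + z 0 j.
  by move=> j; rewrite E mxE.
have Dj : forall j, (j \in Pos) -> (j \in Neg) = false.
  move=> j jP; apply/negP => jN.
  by move: Hdis => /disjoint_setI0 /setP /(_ j); rewrite !inE jP jN.
have Hle : forall j, y 0 j * z 0 j <= 0.
  move=> j; have := Hw j; rewrite mxE.
  case: (boolP (j \in Pos)) => jP; first rewrite (Dj _ jP);
  case: (j \in Neg) => /= h; nia.
have Hz0 : forall j, y 0 j * z 0 j = 0.
  have S : \sum_j (- (y 0 j * z 0 j)) = 0.
    rewrite sumrN; apply/eqP; rewrite oppr_eq0 eq_le Hyz andbT.
    by apply: sumr_le0 => j _; exact: Hle.
  move=> j; have := psumr_eq0P (fun j (_ : true) => (eq_ind _ _ (Hle j) _ (esym (oppr_ge0 _)) : 0 <= - (y 0 j * z 0 j))) S.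
  by move=> /(_ j isT) /eqP; rewrite oppr_eq0 => /eqP.
set T := [set j in Pos | y 0 j != 0].
set T' := [set j in Neg | y 0 j != 0].
have Ey : y = pmvec T T'.
  apply/rowP => j; rewrite /pmvec mxE !inE.
  have := Hw j; have := Hz0 j; rewrite mxE.
  case: (boolP (j \in Pos)) => jP; first rewrite (Dj _ jP);
  case: (boolP (j \in Neg)) => jN /=; case: (y 0 j =P 0) => [->|/eqP yn] //=;
  move/eqP; rewrite mulf_eq0 (negPf yn) /= => /eqP -> ; lia.
have sT : T \subset Pos by apply/subsetP => j; rewrite inE => /andP [].
have sT' : T' \subset Neg by apply/subsetP => j; rewrite inE => /andP [].
have Ss : \sum_(i in T) s 0 i = \sum_(i in T') s 0 i.
  by apply/eqP; rewrite -subr_eq0 -dot_pm -Ey Hy.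
case: (HC _ _ sT sT' Ss) => [[e1 e2]|[eT eT']].
  left; rewrite Ey e1 e2; apply/rowP => j; by rewrite !mxE !inE subrr.
right; apply/rowP => j; have := Hw j; rewrite -eT -eT' -Ey mxE; lia.
Qed.


Lemma cm_mono (R : nat) (f : nat -> int) :
  (forall j, (1 <= j <= R)%N -> f j.-1 <= f j) ->
  forall i j, (i <= j <= R)%N -> f i <= f j.
Proof.
move=> H i; elim=> [|j IH] /andP [ij jR].
  by move: ij; rewrite leqn0 => /eqP ->.
case: (ltngtP i j.+1) ij => // [ij|->] _; last by [].
apply: le_trans (IH _) (H j.+1 _); first by apply/andP; split; lia.
by apply/andP; split; lia.
Qed.

Lemma cm_pos (R : nat) (f : nat -> int) :
  f 0%N = 1 -> (forall j, (1 <= j <= R)%N -> f j.-1 <= f j) ->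
  forall j, (j <= R)%N -> 1 <= f j.
Proof.
move=> H0 H j jR; rewrite -H0; apply: cm_mono H _ _ _; by apply/andP; split.
Qed.

Lemma subset_sum (R : nat) (s : 'rV[int]_R.+1) :
  s 0 (inord 0) = 1 ->
  (forall j, (1 <= j <= R)%N -> s 0 (inord j) <= 1 + \sum_(0 <= i < j) s 0 (inord i)) ->
  forall b0, (b0 <= R.+1)%N -> forall t, 0 <= t <= \sum_(0 <= i < b0) s 0 (inord i) ->
  exists P : {set 'I_R.+1}, (forall i, i \in P -> (i < b0)%N) /\
     \sum_(i in P) s 0 i = t.
Proof.
move=> H0 H; elim=> [|b IH] bR t /andP [t0 tS].
  exists set0; split => [i|]; first by rewrite inE.
  rewrite big_set0; move: tS; rewrite big_geq //; lia.
move: tS; rewrite big_nat_recr //= => tS.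
have Hb : s 0 (inord b) <= 1 + \sum_(0 <= i < b) s 0 (inord i).
  move: bR; case: b {IH tS} => [|b] bR; first by rewrite H0 big_geq.
  by apply: H; lia.
case: (lerP t (\sum_(0 <= i < b) s 0 (inord i))) => ht.
  have [P [HP1 HP2]] := IH (ltnW bR) t (introT andP (conj t0 ht)).
  by exists P; split => // i /HP1; lia.
have h1 : 0 <= t - s 0 (inord b) by lia.
have h2 : t - s 0 (inord b) <= \sum_(0 <= i < b) s 0 (inord i) by rewrite lerBlDr.
have [P [HP1 HP2]] := IH (ltnW bR) (t - s 0 (inord b)) (introT andP (conj h1 h2)).
have nP : (inord b : 'I_R.+1) \notin P.
  by apply/negP => /HP1; rewrite inordK //; lia.
exists (inord b |: P); split.
  move=> i; rewrite !inE => /orP [/eqP ->|/HP1]; last lia.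
  by rewrite inordK //.
by rewrite big_setU1 //= HP2; ring.
Qed.

Lemma card_int (R lo len : nat) : (lo + len <= R)%N ->
  #|[set j : 'I_R | (lo <= j < lo + len)%N]| = len.
Proof.
elim: len => [|len IH] h.
  by apply/eqP; rewrite cards_eq0; apply/eqP/setP => j; rewrite !inE addn0; lia.
have hl : (lo + len < R)%N by lia.
have -> : [set j : 'I_R | (lo <= j < lo + len.+1)%N] =
          (Ordinal hl) |: [set j : 'I_R | (lo <= j < lo + len)%N].
  apply/setP => j; rewrite !inE -val_eqE /=.
  case: (ltngtP j (lo + len)) => hj; lia.
rewrite cardsU1 IH; last by lia.
by rewrite inE /=; lia.
Qed.


Lemma main0 (R : nat) (s : 'rV[int]_R.+1) (n : nat) (v : 'I_n.+1 -> 'rV[int]_R.+1)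
 (Hp : forall i, dotZ (v i) s = 0)
 (Hsp : forall x, dotZ x s = 0 -> exists c : 'I_n.+1 -> int, x = \sum_(i < n.+1) c i *: v i)
 (Ho : forall i j, i != j -> dotZ (v i) (v j) <= 0)
 (Hs : \sum_u v u = 0)
 (H0 : s 0 (inord 0) = 1)
 (Hm : forall j, (1 <= j <= R)%N -> s 0 (inord j.-1) <= s 0 (inord j))
 (Hc : forall j, (1 <= j <= R)%N -> s 0 (inord j) <= 1 + \sum_(0 <= i < j) s 0 (inord i))
 (b0 l : nat) (hb0 : (1 <= b0)%N) (hl : (4 <= l)%N) (hbl : (b0 + l <= R.+1)%N)
 (blk : forall j, (b0 <= j < b0 + l)%N -> s 0 (inord j) = s 0 (inord b0))
 (k0 : nat) (hk0 : (k0 <= R)%N) (hk : s 0 (inord b0) < s 0 (inord k0)) :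
 (l.-1)%:R * s 0 (inord b0) <= s 0 (inord k0).
Proof.
have Hpos : forall i : 'I_R.+1, 0 < s 0 i.
  move=> i; rewrite -(inord_val i).
  have /= := cm_pos (f := fun j => s 0 (inord j)) H0 Hm (ltn_ord i) ; lia.
set sb := s 0 (inord b0) in blk hk *; set m := s 0 (inord k0) in hk *.
have sb0 : 0 < sb by apply: Hpos.
rewrite leNgt; apply/negP => hlt.
have hkb : (b0 + l <= k0)%N.
  rewrite leqNgt; apply/negP => h.
  have h1 : (k0 <= (b0 + l).-1 <= R)%N by apply/andP; split; lia.
  have /= := cm_mono (f := fun j => s 0 (inord j)) Hm h1.
  rewrite (blk (b0 + l).-1); last by lia.
  rewrite -/m; lia.
have Sb : sb - 1 <= \sum_(0 <= i < b0) s 0 (inord i).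
  have h1 : (1 <= b0 <= R)%N by apply/andP; split; lia.
  have := Hc b0 h1; rewrite -/sb; lia.
have m0 : 0 <= m by lia.
set q := absz (m %/ sb)%Z.
set t := (m %% sb)%Z.
have qE : (q%:Z) = (m %/ sb)%Z by rewrite /q gez0_abs // divz_ge0.
have mE : m = q%:Z * sb + t by rewrite qE /t -divz_eq.
have t0 : 0 <= t by rewrite /t modz_ge0 // gt_eqF.
have t1 : t < sb by rewrite /t ltz_pmod.
have q1 : (1 <= q)%N.
  rewrite lt0n; apply/negP => /eqP q0; move: mE; rewrite q0 mul0r add0r; lia.
have q2 : (q <= l - 2)%N.
  rewrite leqNgt; apply/negP => h.
  have : (l.-1)%:R * sb <= q%:Z * sb.
    by rewrite ler_pM2r //; lia.
  lia.
have iK : forall x, (x <= R)%N -> nat_of_ord (inord x : 'I_R.+1) = x.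
  by move=> x hx; rewrite inordK.
set f1 := (inord b0 : 'I_R.+1); set f2 := (inord b0.+1 : 'I_R.+1).
set f3 := (inord (b0 + l - 2) : 'I_R.+1); set f4 := (inord (b0 + l - 1) : 'I_R.+1).
set K := (inord k0 : 'I_R.+1).
have v1 : nat_of_ord f1 = b0 by apply: iK; lia.
have v2 : nat_of_ord f2 = b0.+1 by apply: iK; lia.
have v3 : nat_of_ord f3 = (b0 + l - 2)%N by apply: iK; lia.
have v4 : nat_of_ord f4 = (b0 + l - 1)%N by apply: iK; lia.
have vK : nat_of_ord K = k0 by apply: iK; lia.
have d12 : f1 != f2 by rewrite -val_eqE /= v1 v2; lia.
have d13 : f1 != f3 by rewrite -val_eqE /= v1 v3; lia.
have d14 : f1 != f4 by rewrite -val_eqE /= v1 v4; lia.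
have d23 : f2 != f3 by rewrite -val_eqE /= v2 v3; lia.
have d24 : f2 != f4 by rewrite -val_eqE /= v2 v4; lia.
have d34 : f3 != f4 by rewrite -val_eqE /= v3 v4; lia.
have sj : forall j : 'I_R.+1, (b0 <= j < b0 + l)%N -> s 0 j = sb.
  by move=> j hj; rewrite -(inord_val j) blk.
have e2 : s 0 f2 = sb by apply: sj; rewrite v2; lia.
have e3 : s 0 f3 = sb by apply: sj; rewrite v3; lia.
have e4 : s 0 f4 = sb by apply: sj; rewrite v4; lia.
have e1 : s 0 f1 = sb by [].
have Sb' : 0 <= t <= \sum_(0 <= i < b0) s 0 (inord i) by apply/andP; split; lia.
have hbR : (b0 <= R.+1)%N by lia.
have [qe|qg] : q = 1%N \/ (2 <= q)%N by lia.
  have t1' : 1 <= t by move: mE; rewrite qe; clear -hk; lia.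
  have St : 0 <= sb - t <= \sum_(0 <= i < b0) s 0 (inord i) by apply/andP; split; lia.
  have [P [HP1 HP2]] := subset_sum H0 Hc hbR St.
  set Pos := K |: P.
  set Neg := [set f1; f2].
  have KP : K \notin P by apply/negP => /HP1; rewrite vK; clear -hkb hl; lia.
  have sPos : \sum_(i in Pos) s 0 i = 2 * sb.
    by rewrite big_setU1 //= HP2 -/m mE qe; ring.
  have f1n2 : f1 \notin [set f2] by rewrite inE.
  have sNeg : \sum_(i in Neg) s 0 i = 2 * sb.
    by rewrite big_setU1 //= big_set1 e1 e2; ring.
  have sN : forall j, j \in Neg -> s 0 j = sb.
    by move=> j; rewrite !inE => /orP [/eqP ->|/eqP ->].
  have Pn1 : forall j, j \in P -> (j == f1) = false.
    by move=> j /HP1 h; rewrite -val_eqE /= v1; clear -h; lia.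
  have Pn2 : forall j, j \in P -> (j == f2) = false.
    by move=> j /HP1 h; rewrite -val_eqE /= v2; clear -h; lia.
  have K1 : (K == f1) = false by rewrite -val_eqE /= vK v1; clear -hkb hl; lia.
  have K2 : (K == f2) = false by rewrite -val_eqE /= vK v2; clear -hkb hl; lia.
  have dis : [disjoint Pos & Neg].
    rewrite disjoint_subset; apply/subsetP => j; rewrite !inE => /orP [/eqP ->|jP].
      by rewrite K1 K2.
    by rewrite Pn1 ?Pn2.
  have Hw : dotZ (pmvec Pos Neg) s = 0 by rewrite dot_pm sPos sNeg subrr.
  have HC : forall T T' : {set 'I_R.+1}, T \subset Pos -> T' \subset Neg ->
     \sum_(i in T) s 0 i = \sum_(i in T') s 0 i ->
     (T = set0 /\ T' = set0) \/ (T = Pos /\ T' = Neg).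
    move=> T T' hT hT' hS.
    have nn : forall i, 0 <= s 0 i by move=> i; apply: ltW.
    case: (boolP (K \in T)) => KT.
      have mT : m <= \sum_(i in T) s 0 i := sum_ge_mem nn KT.
      have eT' : T' = Neg.
        case: (boolP (Neg \subset T')) => hN; first by apply/eqP; rewrite eqEsubset hT' hN.
        have [j jN jT'] := subsetPn hN.
        have := sum_le_miss nn hT' jN jT'; rewrite sNeg (sN _ jN) -hS.
        by move: mT hk; clear; lia.
      right; split => //; apply: sum_full => //.
      by rewrite hS eT' sNeg sPos.
    have hTP : T \subset P.
      apply/subsetP => j jT; have := subsetP hT j jT; rewrite !inE => /orP [/eqP e|//].
      by move: KT; rewrite -e jT.
    have TP : \sum_(i in T) s 0 i <= sb - t.
      by rewrite -HP2 -(sum_sub _ hTP) lerDl; apply: sum_ge0.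
    have eT' : T' = set0.
      case: (boolP (T' == set0)) => [/eqP //|/set0Pn [j jT']].
      exfalso.
      have := sum_ge_mem nn jT'; rewrite (sN _ (subsetP hT' j jT')) -hS.
      by move: TP t1'; clear; lia.
    left; split => //; apply: sum_eq0 => //.
    by rewrite hS eT' big_set0.
  have Hirr := irr_pm Hpos dis HC.
  have f1A : f1 \in Neg by rewrite !inE eqxx.
  have f2A : f2 \in Neg by rewrite !inE eqxx orbT.
  have f3A : f3 \notin Neg by rewrite !inE negb_or eq_sym d13 eq_sym d23.
  have f4A : f4 \notin Neg by rewrite !inE negb_or eq_sym d14 eq_sym d24.
  have nP : forall j : 'I_R.+1, (b0 <= j < b0 + l)%N -> (j \in Pos) = false.
    move=> j hj; rewrite !inE; apply/negP => /orP [/eqP e|/HP1].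
      by move: hj; rewrite e vK; clear -hkb hl; lia.
    by clear -hj; lia.
  have n1 : (f1 \in Pos) = false by apply: nP; rewrite v1; clear -hl; lia.
  have n2 : (f2 \in Pos) = false by apply: nP; rewrite v2; clear -hl; lia.
  have n3 : (f3 \in Pos) = false by apply: nP; rewrite v3; clear -hl; lia.
  have n4 : (f4 \in Pos) = false by apply: nP; rewrite v4; clear -hl; lia.
  have e3' : s 0 f1 = s 0 f3 by rewrite e3.
  have e4' : s 0 f1 = s 0 f4 by rewrite e4.
  have w12 : pmvec Pos Neg 0 f1 = pmvec Pos Neg 0 f2 by rewrite !mxE f1A f2A n1 n2.
  have w34 : pmvec Pos Neg 0 f3 = pmvec Pos Neg 0 f4.
    by rewrite !mxE (negPf f3A) (negPf f4A) n3 n4.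
  have w13 : pmvec Pos Neg 0 f1 != pmvec Pos Neg 0 f3.
    by rewrite !mxE f1A (negPf f3A) n1 n3.
  exact: (core Hpos Hp Hsp Ho Hs d12 d13 d14 d23 d24 d34 (esym e2) e3' e4' Hw Hirr w12 w34 w13).
have [P [HP1 HP2]] := subset_sum H0 Hc hbR Sb'.
set A := [set j : 'I_R.+1 | (b0 <= j < b0 + q)%N].
set Neg := A :|: P.
have sA : \sum_(i in A) s 0 i = q%:Z * sb.
  rewrite (eq_bigr (fun _ => sb)); last first.
    by move=> i; rewrite inE => hi; apply: sj; lia.
  rewrite sumr_const card_int; last by lia.
  by rewrite -mulr_natl -natz.
have NA : Neg :\: A = P.
  apply/setP => j; rewrite !inE; case: (boolP (j \in P)) => jP; rewrite ?orbT ?orbF ?andbT ?andNb //.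
  by have := HP1 _ jP; lia.
have sN : \sum_(i in Neg) s 0 i = m.
  by rewrite -(sum_sub _ (subsetUl A P)) NA sA HP2 mE.
have KN : K \notin Neg.
  rewrite !inE negb_or; apply/andP; split; first by rewrite vK; lia.
  by apply/negP => /HP1; lia.
have dis : [disjoint [set K] & Neg] by rewrite disjoints1.
have Hw : dotZ (pmvec [set K] Neg) s = 0 by rewrite dot_pm big_set1 sN subrr.
have HC : forall T T' : {set 'I_R.+1}, T \subset [set K] -> T' \subset Neg ->
     \sum_(i in T) s 0 i = \sum_(i in T') s 0 i ->
     (T = set0 /\ T' = set0) \/ (T = [set K] /\ T' = Neg).
  move=> T T' hT hT' hS; move: hT; rewrite subset1 => /orP [/eqP eT|/eqP eT].
    right; split => //; apply: sum_full => //.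
    by rewrite -hS eT big_set1 sN.
  left; split => //; apply: sum_eq0 => //.
  by rewrite -hS eT big_set0.
have Hirr := irr_pm Hpos dis HC.
have hq1 : (b0 < b0 + q)%N by clear -q1; lia.
have hq2 : (b0.+1 < b0 + q)%N by clear -qg; lia.
have f1A : f1 \in Neg by rewrite !inE v1 leqnn hq1.
have f2A : f2 \in Neg by rewrite !inE v2 leqnSn hq2.
have h3 : (b0 + q <= b0 + l - 2)%N by clear -q2 hl; lia.
have h4 : (b0 + q <= b0 + l - 1)%N by clear -q2 hl; lia.
have f3A : f3 \notin Neg.
  rewrite !inE negb_or v3; apply/andP; split; first by rewrite negb_and -leqNgt h3 orbT.
  by apply/negP => /HP1; rewrite v3; clear -hl; lia.
have f4A : f4 \notin Neg.
  rewrite !inE negb_or v4; apply/andP; split; first by rewrite negb_and -leqNgt h4 orbT.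
  by apply/negP => /HP1; rewrite v4; clear -hl; lia.
have nK : forall j : 'I_R.+1, (nat_of_ord j < b0 + l)%N -> (j \in [set K]) = false.
  by move=> j hj; rewrite inE -val_eqE /= vK; clear -hj hkb; lia.
have n1 : (f1 \in [set K]) = false by apply: nK; rewrite v1; clear -hl; lia.
have n2 : (f2 \in [set K]) = false by apply: nK; rewrite v2; clear -hl; lia.
have n3 : (f3 \in [set K]) = false by apply: nK; rewrite v3; clear -hl; lia.
have n4 : (f4 \in [set K]) = false by apply: nK; rewrite v4; clear -hl; lia.
have e3' : s 0 f1 = s 0 f3 by rewrite e3.
have e4' : s 0 f1 = s 0 f4 by rewrite e4.
have w12 : pmvec [set K] Neg 0 f1 = pmvec [set K] Neg 0 f2 by rewrite !mxE f1A f2A n1 n2.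
have w34 : pmvec [set K] Neg 0 f3 = pmvec [set K] Neg 0 f4.
  by rewrite !mxE (negPf f3A) (negPf f4A) n3 n4.
have w13 : pmvec [set K] Neg 0 f1 != pmvec [set K] Neg 0 f3.
  by rewrite !mxE f1A (negPf f3A) n1 n3.
exact: (core Hpos Hp Hsp Ho Hs d12 d13 d14 d23 d24 d34 (esym e2) e3' e4' Hw Hirr w12 w34 w13).
Qed.


Theorem proposition6p2 (r : nat) (s : 'rV[int]_r) (l b : nat) :
  changemaker s ->
  has_obtuse_superbase_perp s ->
  (4 <= l)%N -> (1 < b)%N -> (b + l - 1 <= r)%N ->
  coord1 s b.-1 < coord1 s b ->
  (forall i : nat, (b <= i <= b + l - 1)%N -> coord1 s i = coord1 s b) ->
  forall k : nat, (1 <= k <= r)%N -> coord1 s b < coord1 s k ->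
    (l.-1)%:R * coord1 s b <= coord1 s k.
Proof.
case: r s => [|R] s [hr [h1 hcm]]; first by [].
move=> [n [v [Hp Hsp Hrk Ho Hs]]] hl hb hbl _ hblk k hk hbk.
rewrite /coord1 /= in h1 hcm hblk hbk *.
have Hm : forall j, (1 <= j <= R)%N -> s 0 (inord j.-1) <= s 0 (inord j).
  move=> j hj; have := hcm j.+1 (ltac:(lia)); case => + _; by [].
have Hc : forall j, (1 <= j <= R)%N -> s 0 (inord j) <= 1 + \sum_(0 <= i < j) s 0 (inord i).
  move=> j hj; have := hcm j.+1 (ltac:(lia)); case => _ /=.
  by rewrite big_add1 /=.
have blk : forall j, (b.-1 <= j < b.-1 + l)%N -> s 0 (inord j) = s 0 (inord b.-1).
  move=> j hj; have := hblk j.+1 (ltac:(lia)); by [].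
apply: (main0 Hp Hsp Ho Hs h1 Hm Hc (b0 := b.-1) (l := l) _ hl _ blk (k0 := k.-1)) => //.
- by lia.
- by lia.
- by lia.
Qed.
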